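(* Let $Q$ be a complete quiver and let $j$ be a mutable vertex which is cycle-preserving for $Q$ and is red or green. Then every vertex that is red or green in $Q$ is red or green in $\mu_j(Q)$. Moreover, for every mutable vertex $k$ that is neither red nor green in $Q$, either the numbers $b_{ku}$ for all frozen $u$ are the same in $Q$ and in $\mu_j(Q)$, or $k$ is red or green in $\mu_j(Q)$.
   Context: A quiver is a finite directed multigraph with no loops and no oriented 2-cycles, whose vertex set is partitioned into mutable and frozen vertices; arrows between two frozen vertices are ignored. $b_{ik}$ = number of arrows $i\to k$ minus number of arrows $k\to i$; $Q|_S$ is the induced subquiver on $S$. Mutation $\mu_j$ at mutable $j$: for each path $i\to j\to k$ add $b_{ij}b_{jk}$ arrows $i\to k$, reverse all arrows at $j$, cancel 2-cycles. Complete: at least one arrow between every pair of vertices at least one of which is mutable. A 3-vertex (sub)quiver is an oriented 3-cycle if it has at most one frozen vertex and its underlying directed graph is not acyclic. A mutable vertex $j$ is cycle-preserving for $Q$ if whenever $Q|_{\{i,j,k\}}$ is an oriented 3-cycle containing $j$, so is $\mu_j(Q)|_{\{i,j,k\}}$. A mutable vertex adjacent to at least one frozen vertex is red (resp. green) if all arrows between it and frozen vertices point towards (resp. away from) it. *)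

(* Defs.v *)
(* A quiver on a finite vertex type V with frozen vertices
   [frozen] is encoded by its skew-symmetric exchange matrix
   b i k = #(arrows i -> k) - #(arrows k -> i); since the quiver has no
   loops and no oriented 2-cycles, b determines the quiver (up to the
   ignored frozen-frozen arrows). *)
From mathcomp Require Import all_boot all_order all_algebra.
Set Implicit Arguments. Unset Strict Implicit. Unset Printing Implicit Defensive.
Import Order.TTheory GRing.Theory Num.Theory.
Local Open Scope ring_scope.

Section Quiver.
Variables (V : finType) (frozen : pred V).

Definition exmat := V -> V -> int.

Definition skew_symmetric (b : exmat) : Prop := forall i k, b i k = - b k i.

(* mutation at j: for each path i -> j -> k add b_ij b_jk arrows i -> k
   (and symmetrically for k -> j -> i), reverse arrows at j, cancel 2-cycles *)
Definition mutate (j : V) (b : exmat) : exmat := fun i k =>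
  if (i == j) || (k == j) then - b i k
  else b i k
       + (if (0 < b i j) && (0 < b j k) then b i j * b j k
          else if (b i j < 0) && (b j k < 0) then - (b i j * b j k)
          else 0).

Definition complete (b : exmat) : Prop :=
  forall i k, i != k -> (~~ frozen i || ~~ frozen k) -> b i k != 0.

(* Q|_{i,j,k} is an oriented 3-cycle: three distinct vertices, at most one
   frozen, and the underlying directed graph contains a directed cycle
   (necessarily through all three vertices, as there are no loops or 2-cycles). *)
Definition oriented3cycle (b : exmat) (i j k : V) : Prop :=
  [/\ i != j, j != k & i != k] /\
  ((~~ frozen i && ~~ frozen j) || (~~ frozen j && ~~ frozen k)
     || (~~ frozen i && ~~ frozen k)) /\
  ((0 < b i j /\ 0 < b j k /\ 0 < b k i) \/
   (b i j < 0 /\ b j k < 0 /\ b k i < 0)).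

Definition cycle_preserving (b : exmat) (j : V) : Prop :=
  ~~ frozen j /\
  forall i k, oriented3cycle b i j k -> oriented3cycle (mutate j b) i j k.

Definition red (b : exmat) (k : V) : Prop :=
  ~~ frozen k /\ (exists u, frozen u /\ b k u != 0) /\
  (forall u, frozen u -> b k u <= 0).

Definition green (b : exmat) (k : V) : Prop :=
  ~~ frozen k /\ (exists u, frozen u /\ b k u != 0) /\
  (forall u, frozen u -> 0 <= b k u).

End Quiver.

(* Main.v *)
Require Import Defs.
From mathcomp Require Import all_boot all_order all_algebra.
From mathcomp Require Import zify.
Import Order.TTheory GRing.Theory Num.Theory.
Local Open Scope ring_scope.

Section S.
Variables (V : finType) (frozen : pred V) (b : exmat V) (j : V).
Hypotheses (hs : skew_symmetric b) (hc : complete frozen b) (hj : ~~ frozen j)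
  (hcp : cycle_preserving frozen b j).

Lemma mut_fu v u : v != j -> u != j ->
  mutate j b v u = b v u +
  (if (0 < b v j) && (0 < b j u) then b v j * b j u
   else if (b v j < 0) && (b j u < 0) then - (b v j * b j u) else 0).
Proof. by move=> h1 h2; rewrite /mutate (negbTE h1) (negbTE h2). Qed.

Lemma neq_fr u v : frozen u -> ~~ frozen v -> u != v.
Proof. by move=> hu hv; apply/negP => /eqP E; move: hv; rewrite -E hu. Qed.

Lemma key_green v : ~~ frozen v -> v != j -> (forall u, frozen u -> 0 < b j u) ->
  0 < b v j -> forall u, frozen u -> 0 < mutate j b v u.
Proof.
move=> hv hvj hju hpos u hu.
have huj : u != j by exact: neq_fr hu hj.
have huv : u != v by exact: neq_fr hu hv.
have hbju := hju u hu.
rewrite mut_fu // hpos hbju /=.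
have hvu : b v u != 0 by apply: hc; rewrite ?(eq_sym v) ?hv.
case: (ltrgtP 0 (b v u)) => [h|h|h]; last by rewrite h eqxx in hvu.
  by rewrite ltr_wpDr // ltW // mulr_gt0.
have hcyc : oriented3cycle frozen b v j u.
  split; first by split => //; rewrite eq_sym.
  split; first by rewrite hv hj.
  by left; split => //; split => //; rewrite hs oppr_gt0.
have [_ [_ [[h1 _]|[_ [_ h3]]]]] := hcp.2 v u hcyc.
  by move: h1; rewrite /mutate eqxx orbT oppr_gt0 ltNge ltW.
move: h3; rewrite mut_fu // 1?eq_sym //.
have hf1 : (b j u < 0) = false by rewrite ltNge ltW.
rewrite (hs u j) (hs j v) !oppr_gt0 !oppr_lt0 hf1 hbju hpos /= hs.
have : 0 < b v j * b j u by rewrite mulr_gt0.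
lia.
Qed.

Lemma key_red v : ~~ frozen v -> v != j -> (forall u, frozen u -> b j u < 0) ->
  b v j < 0 -> forall u, frozen u -> mutate j b v u < 0.
Proof.
move=> hv hvj hju hneg u hu.
have huj : u != j by exact: neq_fr hu hj.
have huv : u != v by exact: neq_fr hu hv.
have hbju := hju u hu.
have hf0 : (0 < b v j) = false by rewrite ltNge ltW.
rewrite mut_fu // hneg hbju hf0 /=.
have hvu : b v u != 0 by apply: hc; rewrite ?(eq_sym v) ?hv.
have hp : 0 < b v j * b j u by rewrite nmulr_rgt0.
case: (ltrgtP 0 (b v u)) => [h|h|h]; last by rewrite h eqxx in hvu.
  have hcyc : oriented3cycle frozen b v j u.
    split; first by split => //; rewrite eq_sym.
    split; first by rewrite hv hj.
    by right; split => //; split => //; rewrite hs oppr_lt0.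
  have [_ [_ [[_ [_ h3]]|[h1 _]]]] := hcp.2 v u hcyc; last first.
    by move: h1; rewrite /mutate eqxx orbT oppr_lt0 ltNge ltW.
  move: h3; rewrite mut_fu // 1?eq_sym //.
  rewrite (hs u j) (hs j v) !oppr_gt0 hbju hneg /= hs.
  lia.
lia.
Qed.

Lemma mut_fu0 v u : v != j -> u != j -> (0 <= b j u) -> b v j < 0 ->
  mutate j b v u = b v u.
Proof.
move=> h1 h2 h3 h4.
have f1 : (0 < b v j) = false by rewrite ltNge ltW.
have f2 : (b j u < 0) = false by rewrite ltNge h3.
rewrite mut_fu // f1 f2 andbF /=.
by rewrite addr0.
Qed.

Lemma mut_fu0' v u : v != j -> u != j -> (b j u <= 0) -> 0 < b v j ->
  mutate j b v u = b v u.
Proof.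
move=> h1 h2 h3 h4.
have f1 : (b v j < 0) = false by rewrite ltNge ltW.
have f2 : (0 < b j u) = false by rewrite ltNge h3.
rewrite mut_fu // f1 f2 andbF /=.
by rewrite addr0.
Qed.

End S.

Theorem mainTheorem5 (V : finType) (frozen : pred V) (b : exmat V) (j : V) :
  skew_symmetric b -> complete frozen b ->
  ~~ frozen j -> cycle_preserving frozen b j ->
  (red frozen b j \/ green frozen b j) ->
  (forall v, red frozen b v \/ green frozen b v ->
     red frozen (mutate j b) v \/ green frozen (mutate j b) v) /\
  (forall k, ~~ frozen k -> ~ red frozen b k -> ~ green frozen b k ->
     (forall u, frozen u -> mutate j b k u = b k u) \/
     (red frozen (mutate j b) k \/ green frozen (mutate j b) k)).
Proof.
move=> hs hc hj hcp hrg.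
have hjj u : frozen u -> mutate j b j u = - b j u.
  by move=> _; rewrite /mutate eqxx.
have hnz u : frozen u -> b j u != 0.
  by move=> hu; apply: hc; rewrite ?hj // eq_sym (@neq_fr _ frozen _ _ hu hj).
have hvmut v : red frozen b v \/ green frozen b v -> ~~ frozen v.
  by case=> -[].
have [u0 [hu0 hu0']] : exists u, frozen u /\ b j u != 0 by case: hrg => -[_ []].
case: hrg => [[_ [_ hjr]]|[_ [_ hjg]]].
- have hjr' u : frozen u -> b j u < 0 by move=> hu; rewrite lt_neqAle hnz ?hjr.
  split.
  + move=> v hv.
    have hvf := hvmut v hv.
    have [/eqP Evj|hvj] := boolP (v == j).
      subst v; right; split => //; split.
        by exists u0; split => //; rewrite hjj // oppr_eq0 hnz.
      by move=> u hu; rewrite hjj // oppr_ge0 hjr.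
    have hvj0 : b v j != 0 by apply: hc; rewrite ?hvf.
    case: (ltrgtP 0 (b v j)) => [h|h|h]; last by rewrite h eqxx in hvj0.
    * have E u : frozen u -> mutate j b v u = b v u.
        move=> hu; apply: mut_fu0' => //; first by exact: (@neq_fr _ frozen _ _ hu).
        exact: ltW (hjr' u hu).
      case: hv => -[_ [[w [hw hw']] hh]]; [left|right]; split => //;
        (split; first by exists w; rewrite E).
        by move=> u hu; rewrite E // hh.
      by move=> u hu; rewrite E // hh.
    * have [w [hw _]] : exists w, frozen w /\ b v w != 0 by case: hv => -[_ []].
      left; split => //; split.
        by exists w; split => //; rewrite lt_eqF // (@key_red V frozen b j hs hc hj hcp).
      by move=> u hu; rewrite ltW // (@key_red V frozen b j hs hc hj hcp).
  + move=> k hk hnr hng.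
    have hkj : k != j.
      by apply/eqP => E; subst k; apply: hnr; split => //; split; [exists u0 | ].
    have hkj0 : b k j != 0 by apply: hc; rewrite ?hk.
    case: (ltrgtP 0 (b k j)) => [h|h|h]; last by rewrite h eqxx in hkj0.
    * left => u hu; apply: mut_fu0' => //; first by exact: (@neq_fr _ frozen _ _ hu).
      exact: ltW (hjr' u hu).
    * right; left; split => //; split.
        by exists u0; split => //; rewrite lt_eqF // (@key_red V frozen b j hs hc hj hcp).
      by move=> u hu; rewrite ltW // (@key_red V frozen b j hs hc hj hcp).
- have hjg' u : frozen u -> 0 < b j u by move=> hu; rewrite lt_neqAle eq_sym hnz ?hjg.
  split.
  + move=> v hv.
    have hvf := hvmut v hv.
    have [/eqP Evj|hvj] := boolP (v == j).
      subst v; left; split => //; split.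
        by exists u0; split => //; rewrite hjj // oppr_eq0 hnz.
      by move=> u hu; rewrite hjj // oppr_le0 hjg.
    have hvj0 : b v j != 0 by apply: hc; rewrite ?hvf.
    case: (ltrgtP 0 (b v j)) => [h|h|h]; last by rewrite h eqxx in hvj0.
    * have [w [hw _]] : exists w, frozen w /\ b v w != 0 by case: hv => -[_ []].
      right; split => //; split.
        by exists w; split => //; rewrite gt_eqF // (@key_green V frozen b j hs hc hj hcp).
      by move=> u hu; rewrite ltW // (@key_green V frozen b j hs hc hj hcp).
    * have E u : frozen u -> mutate j b v u = b v u.
        move=> hu; apply: mut_fu0 => //; first by exact: (@neq_fr _ frozen _ _ hu).
        exact: ltW (hjg' u hu).
      case: hv => -[_ [[w [hw hw']] hh]]; [left|right]; split => //;
        (split; first by exists w; rewrite E).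
        by move=> u hu; rewrite E // hh.
      by move=> u hu; rewrite E // hh.
  + move=> k hk hnr hng.
    have hkj : k != j.
      by apply/eqP => E; subst k; apply: hng; split => //; split; [exists u0 | ].
    have hkj0 : b k j != 0 by apply: hc; rewrite ?hk.
    case: (ltrgtP 0 (b k j)) => [h|h|h]; last by rewrite h eqxx in hkj0.
    * right; right; split => //; split.
        by exists u0; split => //; rewrite gt_eqF // (@key_green V frozen b j hs hc hj hcp).
      by move=> u hu; rewrite ltW // (@key_green V frozen b j hs hc hj hcp).
    * left => u hu; apply: mut_fu0 => //; first by exact: (@neq_fr _ frozen _ _ hu).
      exact: ltW (hjg' u hu).
Qed.
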